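(* Let $n\ge2$ and let $M\subset\mathbb{C}^n\times\mathbb{R}$ be given by $$s=\sum_{j=1}^a|z_j|^2-\sum_{j=a+1}^{a+b}|z_j|^2+B(z,z)+\overline{B(z,z)}=Q(z,\bar z),$$ where $a\ge2$, $a+b\le n$, $B$ is a complex bilinear form, and the real quadratic form $Q$ is nondegenerate. Write $A(z,\bar z)=\sum_{j=1}^a|z_j|^2-\sum_{j=a+1}^{a+b}|z_j|^2$. Suppose $f(z,\bar z)$ is a polynomial such that, considered as a function on $M$ parametrized by $z$, $f$ is a CR function on $M_{CR}$. Then there exists a polynomial $F(z,s)$ such that $$f(z,\bar z)=F\big(z,A(z,\bar z)+B(z,z)+\overline{B(z,z)}\big).$$ Furthermore, if $f$ is homogeneous of degree $d$, then $F$ is weighted homogeneous of degree $d$, i.e. $F(z,s)=\sum_{j+2k=d}P_j(z)s^k$ with each $P_j$ a homogeneous polynomial of degree $j$.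
   Context: $M_{CR}$ is the set of points $p\in M$ where $\dim_{\mathbb{C}}\big((\mathbb{C}\otimes T_pM)\cap\operatorname{span}\{\partial/\partial\bar z_1,\dots,\partial/\partial\bar z_n\}\big)=n-1$; $f$ is CR on $M_{CR}$ if it is annihilated by all vector fields on $M_{CR}$ with values in this space. *)

(* Defs.v *)
From HB Require Import structures.
From mathcomp Require Import all_boot all_order all_algebra.
From mathcomp Require Import reals.
From mathcomp Require Import complex.
From mathcomp Require Import mpoly.
Set Implicit Arguments. Unset Strict Implicit. Unset Printing Implicit Defensive.
Import Order.TTheory GRing.Theory Num.Theory.
Local Open Scope ring_scope.
Local Open Scope complex_scope.

Section CRDefs.
Variable R : realType.
Local Notation C := (R[i]).
Variable n : nat.

(* Variables of polynomials in (z, zbar): 'I_(n+n); z_j = lshift, zbar_j = rshift *)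
Definition zv (j : 'I_n) : 'I_(n + n) := lshift n j.
Definition zbv (j : 'I_n) : 'I_(n + n) := rshift n j.

Definition zzbar (z : 'rV[C]_n) : 'I_(n + n) -> C :=
  fun i => match split i with inl j => z 0 j | inr j => (z 0 j)^* end.

Definition Apoly (a b : nat) : {mpoly C[n + n]} :=
  \sum_(j < n | (j < a)%N) ('X_(zv j) * 'X_(zbv j))
  - \sum_(j < n | (a <= j < a + b)%N) ('X_(zv j) * 'X_(zbv j)).

Definition Bpoly (beta : 'M[C]_n) : {mpoly C[n + n]} :=
  \sum_(j < n) \sum_(k < n) (beta j k *: ('X_(zv j) * 'X_(zv k))).

Definition Bbarpoly (beta : 'M[C]_n) : {mpoly C[n + n]} :=
  \sum_(j < n) \sum_(k < n) ((beta j k)^* *: ('X_(zbv j) * 'X_(zbv k))).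

Definition Qpoly (a b : nat) (beta : 'M[C]_n) : {mpoly C[n + n]} :=
  Apoly a b + Bpoly beta + Bbarpoly beta.

Definition Qfun a b beta (z : 'rV[C]_n) : C := (Qpoly a b beta).@[zzbar z].

(* nondegeneracy of the real quadratic form Q on C^n = R^(2n):
   the radical of its polar (R-bilinear) form is trivial *)
Definition nondegenerate_Q a b beta : Prop :=
  forall w : 'rV[C]_n,
    (forall z : 'rV[C]_n, Qfun a b beta (z + w) - Qfun a b beta z - Qfun a b beta w = 0) ->
    w = 0.

(* M = {(z, w) in C^n x C : Im w = 0, Re w = Q(z,zbar)} in C^(n+1), coordinates
   (z_1..z_n, w) indexed by 'I_(n+1).  Defining functions rho1 = Im w,
   rho2 = Re w - Q(z,zbar).  Column k of [dbar_rho] is the vector of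
   (d rho_k / d zbar_1, ..., d rho_k / d zbar_n, d rho_k / d wbar) at (z, Q z):
   d(Im w)/d wbar = i/2, d(Re w)/d wbar = 1/2. *)
Definition dbar_rho a b beta (z : 'rV[C]_n) : 'M[C]_(n + 1, 2) :=
  \matrix_(i < n + 1, k < 2)
    match split i with
    | inl j => if k == 0 then 0
               else - ((Qpoly a b beta)^`M(zbv j)).@[zzbar z]
    | inr _ => if k == 0 then 'i / 2%:R else 1 / 2%:R
    end.

(* (C (x) T_pM) cap span{d/dzbar_1,..,d/dzbar_n, d/dwbar} at p = (z, Q z) is the
   space of u : 'rV_(n+1) with u *m dbar_rho = 0, i.e. the row space of kermx. *)
Definition in_MCR a b beta (z : 'rV[C]_n) : Prop :=
  \rank (kermx (dbar_rho a b beta z)) = n.-1.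

(* f (polynomial in z, zbar, viewed on M via z, extended independently of w)
   is annihilated by every (0,1) vector tangent to M at every point of M_CR *)
Definition CR_on_MCR a b beta (f : {mpoly C[n + n]}) : Prop :=
  forall z : 'rV[C]_n, in_MCR a b beta z ->
  forall u : 'rV[C]_(n + 1), u *m dbar_rho a b beta z = 0 ->
    \sum_(j < n) u 0 (lshift 1 j) * (f^`M(zbv j)).@[zzbar z] = 0.

Definition zQ a b beta (z : 'rV[C]_n) : 'I_(n + 1) -> C :=
  fun i => match split i with inl j => z 0 j | inr _ => Qfun a b beta z end.

Definition weighted_homog (d : nat) (F : {mpoly C[n + 1]}) : Prop :=
  forall m, m \in msupp F ->
    (\sum_(j < n) m (lshift 1 j) + 2 * m (rshift n (ord0 : 'I_1)))%N = d.

End CRDefs.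

(* Main.v *)
Require Import Defs.
From HB Require Import structures.
From mathcomp Require Import all_boot all_order all_algebra.
From mathcomp Require Import reals complex mpoly.
From mathcomp Require Import ring zify.
From Stdlib Require Import Classical FunctionalExtensionality.
Set Implicit Arguments. Unset Strict Implicit. Unset Printing Implicit Defensive.
Import Order.TTheory GRing.Theory Num.Theory.
Local Open Scope ring_scope.

Section Gen.
Local Open Scope complex_scope.
Variable K : numFieldType.

Lemma mpoly_ringind k (P : {mpoly K[k]} -> Prop) :
  (forall c, P c%:MP) -> (forall i, P 'X_i) ->
  (forall p q, P p -> P q -> P (p + q)) -> (forall p q, P p -> P q -> P (p * q)) ->
  forall p, P p.
Proof.
move=> HC HX HD HM p; rewrite (mpolyE p).
apply: big_ind; first by rewrite -mpolyC0.
  by move=> x y; apply: (HD).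
move=> m _; have -> : p@_m *: 'X_[m] = (p@_m)%:MP * 'X_[m] by rewrite mul_mpolyC.
apply: (HM) => //.
rewrite mpolyXE_id; apply: big_ind; first by rewrite -mpolyC1.
  by move=> x y; apply: (HM).
move=> i _; elim: (m i) => [|e IHe]; first by rewrite expr0 -mpolyC1.
by rewrite exprS; apply: (HM).
Qed.

Lemma comp_mpolyA k l m (p : {mpoly K[k]}) (L : k.-tuple {mpoly K[l]})
   (M : l.-tuple {mpoly K[m]}) :
  (p \mPo L) \mPo M = p \mPo [tuple (tnth L i \mPo M) | i < k].
Proof.
elim/mpoly_ringind: p.
- by move=> c; rewrite !comp_mpolyC.
- by move=> i; rewrite !comp_mpolyXU -!tnth_nth tnth_map tnth_ord_tuple.
- by move=> p q Hp Hq; rewrite !comp_mpolyD Hp Hq.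
- by move=> p q Hp Hq; rewrite !rmorphM /= Hp Hq.
Qed.

Lemma mderivXU k (i j : 'I_k) : ('X_j : {mpoly K[k]})^`M(i) = (j == i)%:R%:MP.
Proof.
rewrite mderivX mnm1E; case: eqP => [->|_]; last by rewrite scale0r mpolyC0.
by rewrite -{1}[U_(i)%MM]add0m addmK mpolyX0 scale1r mpolyC1.
Qed.

Lemma msize_mderiv k (p : {mpoly K[k]}) i : (msize (p^`M(i)) <= (msize p).-1)%N.
Proof.
rewrite [X in (X <= _)%N]msizeE; apply/bigmax_leqP_seq => m Hm _.
move: Hm; rewrite mcoeff_msupp mcoeff_mderiv => Hm.
have Hs : (m + U_(i))%MM \in msupp p.
  rewrite mcoeff_msupp; apply: contraNneq Hm => ->; by rewrite mul0rn.
by have := msize_mdeg_lt Hs; rewrite mdegD mdeg1 addn1 => H; rewrite ltn_predRL.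
Qed.

Definition antider k (i : 'I_k) (G : {mpoly K[k]}) : {mpoly K[k]} :=
  \sum_(m <- msupp G) (G@_m / ((m i).+1)%:R) *: 'X_[(m + U_(i))%MM].

Lemma antiderK k (i : 'I_k) G : (antider i G)^`M(i) = G.
Proof.
rewrite /antider raddf_sum /= [RHS]mpolyE; apply: eq_bigr => m _.
rewrite mderivZ mderivX addmK scalerA mnmDE mnm1E eqxx addn1.
by rewrite mulfVK // pnatr_eq0.
Qed.

Lemma mderiv0_supp k (p : {mpoly K[k]}) i :
  p^`M(i) = 0 -> forall m, m \in msupp p -> m i = 0%N.
Proof.
move=> H m Hm; apply/eqP; apply/negPn/negP => Hi.
have Em : m = ((m - U_(i)) + U_(i))%MM.
  by rewrite submK //; apply/mnm_lepP => j; rewrite mnm1E; case: eqP => // <-; rewrite lt0n.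
have := mcoeff_mderiv i p (m - U_(i))%MM; rewrite -Em H mcoeff0 => /esym/eqP.
rewrite mulrn_eq0 /= mcoeff_eq0 Hm.
done.
Qed.

Lemma comp_div k (i : 'I_k) (S : k.-tuple {mpoly K[k]}) :
  (forall j, j != i -> tnth S j = 'X_j) ->
  forall p, exists r, p - (p \mPo S) = ('X_i - tnth S i) * r.
Proof.
move=> HS; elim/mpoly_ringind.
- by move=> c /=; exists 0; rewrite comp_mpolyC subrr mulr0.
- move=> j /=; rewrite comp_mpolyXU -tnth_nth; case: (eqVneq j i) => [->|Hj].
    by exists 1; rewrite mulr1.
  by exists 0; rewrite (HS j Hj) subrr mulr0.
- move=> p q [r1 H1] [r2 H2]; exists (r1 + r2).
  by rewrite comp_mpolyD mulrDr -H1 -H2 opprD addrACA.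
- move=> p q [r1 H1] [r2 H2]; exists (r1 * q + (p \mPo S) * r2).
  rewrite rmorphM /= mulrDr mulrA -H1 mulrCA -H2.
  by rewrite mulrBl mulrBr addrA subrK.
Qed.

Lemma chain_gen k l (T : k.-tuple {mpoly K[l]}) (i : 'I_l) (H : {mpoly K[k]}) :
  (H \mPo T)^`M(i) = \sum_(t < k) (H^`M(t) \mPo T) * (tnth T t)^`M(i).
Proof.
elim/mpoly_ringind: H.
- move=> c; rewrite comp_mpolyC mderivC big1 // => t _.
  by rewrite mderivC comp_mpoly0 mul0r.
- move=> j; rewrite comp_mpolyXU -tnth_nth (bigD1 j) //= mderivXU eqxx mpolyC1 comp_mpoly1 mul1r.
  rewrite big1 ?addr0 // => t Ht; rewrite mderivXU eq_sym (negbTE Ht) mpolyC0.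
  by rewrite comp_mpoly0 mul0r.
- move=> p q Hp Hq; rewrite comp_mpolyD mderivD Hp Hq -big_split /=.
  by apply: eq_bigr => t _; rewrite mderivD comp_mpolyD mulrDl.
- move=> p q Hp Hq; rewrite rmorphM mderivM Hp Hq mulr_suml mulr_sumr -big_split /=.
  apply: eq_bigr => t _; rewrite mderivM comp_mpolyD !rmorphM /=.
  by rewrite mulrDl mulrAC mulrA.
Qed.

End Gen.

Section CX.
Local Open Scope complex_scope.
Variable R : realType.
Local Notation C := R[i].

Lemma poly_real0 (q : {poly C}) : (forall x : R, q.[x%:C] = 0) -> q = 0.
Proof.
move=> H; apply/eqP/negPn/negP => Hq.
pose rs := [seq ((j%:R : R)%:C) | j <- iota 0 (size q)].
have Hall : all (root q) rs.
  by apply/allP => x /mapP [j _ ->]; apply/rootP; apply: H.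
have Hu : uniq rs.
  rewrite map_inj_uniq ?iota_uniq // => j1 j2 /complexI /eqP.
  by rewrite eqr_nat => /eqP.
by have := max_poly_roots Hq Hall Hu; rewrite /rs size_map size_iota ltnn.
Qed.

Definition mtl k (m : 'X_{1..k.+1}) : 'X_{1..k} :=
  [multinom [tuple m (widen_ord (leqnSn k) i) | i < k]].

Lemma mtlE k (m : 'X_{1..k.+1}) i : mtl m i = m (widen_ord (leqnSn k) i).
Proof. by rewrite /mtl mnmE. Qed.

Lemma mtl_eq k (m1 m2 : 'X_{1..k.+1}) :
  (mtl m1 == mtl m2) && (m1 ord_max == m2 ord_max) = (m1 == m2).
Proof.
apply/idP/eqP => [/andP[/eqP H1 /eqP H2]|->]; last by rewrite !eqxx.
apply/mnmP => i; case: (unliftP ord_max i) => [j ->|->] //.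
have -> : lift ord_max j = widen_ord (leqnSn k) j by apply/val_inj; rewrite /= /bump leqNgt ltn_ord.
by rewrite -!mtlE H1.
Qed.

Lemma meval_muni k (p : {mpoly C[k.+1]}) (v : 'I_k.+1 -> C) :
  p.@[v] = (map_poly (meval (fun i => v (widen_ord (leqnSn k) i))) (muni p)).[v ord_max].
Proof.
rewrite muniE mevalE raddf_sum horner_sum /=; apply: eq_bigr => m _.
rewrite map_polyZ hornerZ map_polyXn hornerXn. have -> : forall w (q : {mpoly C[k]}), mpoly_meval__canonical__GRing_RMorphism w q = meval w q by []. rewrite mevalZ mevalX big_ord_recr /= mulrA.
congr (_ * _ * _); apply: eq_bigr => i _; by rewrite mnmE.
Qed.

Lemma mcoeff_muni k (p : {mpoly C[k.+1]}) m :
  p@_m = ((muni p)`_(m ord_max))@_(mtl m).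
Proof.
rewrite muniE coef_sum raddf_sum /=.
rewrite {1}[p]mpolyE raddf_sum /=; apply: eq_bigr => m' _.
rewrite coefZ coefXn mulr_natr mcoeffMn !mcoeffZ !mcoeffX.
rewrite -mtl_eq [m ord_max == _]eq_sym.
by case: (mtl m' == mtl m); case: (m' ord_max == m ord_max); rewrite /= ?mulr0 ?mulr1 ?mulr0n ?mulr1n.
Qed.

Lemma mpoly_real0 k (p : {mpoly C[k]}) :
  (forall r : 'I_k -> R, p.@[fun i => (r i)%:C] = 0) -> p = 0.
Proof.
elim: k p => [|k IH] p H.
  have Hs : (msize p <= 1)%N.
    rewrite msizeE; apply/bigmax_leqP_seq => m _ _.
    by rewrite mdegE big_ord0.
  have := H (fun i => 0); rewrite (msize1_polyC Hs) mevalC => ->.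
  by rewrite mpolyC0.
have Hu : muni p = 0.
  apply/polyP => l; rewrite coef0.
  apply: IH => r.
  pose g := map_poly (meval (fun i => (r i)%:C)) (muni p).
  have Hg : g = 0.
    apply: poly_real0 => x.
    pose w := fun i : 'I_k.+1 => if unlift ord_max i is Some j then r j else x.
    have := H w; rewrite meval_muni /w unlift_none.
    have -> : (fun i : 'I_k => ((if unlift ord_max (widen_ord (leqnSn k) i) is Some j then r j else x)%:C))
            = (fun i => (r i)%:C).
      apply: functional_extensionality => i.
      have -> : widen_ord (leqnSn k) i = lift ord_max i
        by apply/val_inj; rewrite /= /bump leqNgt ltn_ord.
      by rewrite liftK.
    done.
  have := congr1 (fun q : {poly C} => q`_l) Hg; rewrite coef_map coef0; exact: id.
apply/mpolyP => m; by rewrite mcoeff0 mcoeff_muni Hu coef0 mcoeff0.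
Qed.


Section N.
Local Open Scope complex_scope.
Variable n : nat.
Lemma split_zv (j : 'I_n) : split (zv j) = inl j.
Proof. exact: (unsplitK (inl _)). Qed.
Lemma split_zbv (j : 'I_n) : split (zbv j) = inr j.
Proof. exact: (unsplitK (inr _)). Qed.

Definition Ltup : (n+n).-tuple {mpoly C[n+n]} :=
  [tuple (match split i with inl j => 'X_(zv j) + 'i *: 'X_(zbv j)
                           | inr j => 'X_(zv j) - 'i *: 'X_(zbv j) end) | i < n+n].
Definition Mtup : (n+n).-tuple {mpoly C[n+n]} :=
  [tuple (match split i with inl j => 2^-1 *: ('X_(zv j) + 'X_(zbv j))
                           | inr j => (- 'i / 2) *: ('X_(zv j) - 'X_(zbv j)) end) | i < n+n].

Lemma LM_id : [tuple (tnth Ltup i \mPo Mtup) | i < n+n] = [tuple 'X_i | i < n+n].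
Proof.
apply: eq_from_tnth => i; rewrite !tnth_map !tnth_ord_tuple.
have Hii : 'i * (- 'i / 2) = 2^-1 :> C.
  by rewrite mulrA mulrN -expr2 sqr_i opprK mul1r.
have E : forall j, tnth Mtup (zv j) = 2^-1 *: ('X_(zv j) + 'X_(zbv j)).
  by move=> j; rewrite tnth_map tnth_ord_tuple split_zv.
have F : forall j, tnth Mtup (zbv j) = (- 'i / 2) *: ('X_(zv j) - 'X_(zbv j)).
  by move=> j; rewrite tnth_map tnth_ord_tuple split_zbv.
have -> : i = unsplit (split i) by rewrite splitK.
case: (split i) => j /=; rewrite ?split_zv ?split_zbv.
- rewrite comp_mpolyD comp_mpolyZ !comp_mpolyXU -!tnth_nth E F scalerA Hii.
  rewrite -scalerDr addrACA subrr addr0 -mulr2n -scalerMnr scalerMnl -mulr_natr mulVf ?scale1r //.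
  by rewrite pnatr_eq0.
- rewrite comp_mpolyB comp_mpolyZ !comp_mpolyXU -!tnth_nth E F scalerA Hii.
  rewrite -scalerBr opprB addrC addrA subrK -mulr2n -scalerMnr scalerMnl -mulr_natr mulVf ?scale1r //.
  by rewrite pnatr_eq0.
Qed.

Lemma zzbar0 (p : {mpoly C[n+n]}) : (forall z : 'rV[C]_n, p.@[zzbar z] = 0) -> p = 0.
Proof.
move=> H.
have H0 : p \mPo Ltup = 0.
  apply: mpoly_real0 => r; rewrite comp_mpoly_meval.
  pose z : 'rV[C]_n := \row_j ((r (zv j))%:C + 'i * (r (zbv j))%:C).
  rewrite -(H z); apply: meval_eq => i.
  rewrite /zzbar tnth_map tnth_ord_tuple.
  case: (split i) => j.
    by rewrite mxE mevalD mevalZ !mevalXU.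
  by rewrite mxE mevalB mevalZ !mevalXU; simpc.
by rewrite -[p]comp_mpoly_id -LM_id -comp_mpolyA H0 comp_mpoly0.
Qed.
End N.
End CX.

Section Q.
Local Open Scope complex_scope.
Variable R : realType.
Local Notation C := R[i].
Variables (n a b : nat) (beta : 'M[C]_n).
Local Notation Q := (Qpoly a b beta).
Local Notation q j := (Q^`M(zbv j)).
Local Notation P := {mpoly C[n+n]}.

Lemma zv_zbv (l j : 'I_n) : (zv l == zbv j) = false.
Proof. by apply/negbTE; rewrite -val_eqE /= neq_ltn (leq_trans (ltn_ord l)) ?leq_addr. Qed.
Lemma zbv_zv (l j : 'I_n) : (zbv j == zv l) = false.
Proof. by rewrite eq_sym zv_zbv. Qed.
Lemma zbv_eq (l j : 'I_n) : (zbv l == zbv j) = (l == j).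
Proof. by rewrite -val_eqE /= eqn_add2l. Qed.
Lemma zv_eq (l j : 'I_n) : (zv l == zv j) = (l == j).
Proof. by rewrite -val_eqE. Qed.

Definition Bb j : P := \sum_(l < n) \sum_(m < n)
   ((beta l m)^* *: ((l == j)%:R%:MP * 'X_(zbv m) + 'X_(zbv l) * (m == j)%:R%:MP)).

Lemma BbarE j : (Bbarpoly beta)^`M(zbv j) = Bb j.
Proof.
rewrite /Bbarpoly /Bb raddf_sum /=; apply: eq_bigr => l _.
rewrite raddf_sum /=; apply: eq_bigr => m _.
by rewrite mderivZ mderivM !mderivXU !zbv_eq.
Qed.

Lemma BpolyD j : (Bpoly beta)^`M(zbv j) = 0.
Proof.
rewrite /Bpoly raddf_sum /= big1 // => l _; rewrite raddf_sum /= big1 // => m _.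
by rewrite mderivZ mderivM !mderivXU !zv_zbv mpolyC0 mulr0 mul0r addr0 scaler0.
Qed.

Lemma ApolyD (j : 'I_n) : (j < a)%N -> (@Apoly R n a b)^`M(zbv j) = 'X_(zv j).
Proof.
move=> Hj; rewrite /Apoly mderivB.
have Hs : forall (Pr : pred 'I_n) (F : 'I_n -> P),
   (\sum_(l | Pr l) F l)^`M(zbv j) = \sum_(l | Pr l) (F l)^`M(zbv j).
  by move=> Pr F; rewrite raddf_sum.
rewrite !Hs.
have E : forall l, ('X_(zv l) * 'X_(zbv l) : P)^`M(zbv j) = 'X_(zv l) * (l == j)%:R%:MP.
  by move=> l; rewrite mderivM !mderivXU zv_zbv zbv_eq mpolyC0 mul0r add0r.
under eq_bigr do rewrite E. under [X in _ - X]eq_bigr do rewrite E.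
rewrite [X in _ - X]big1 ?subr0; last first.
  move=> l /andP[Hl _]; have -> : (l == j) = false.
    by apply/negbTE; apply: contraTneq Hl => ->; rewrite -ltnNge.
  by rewrite mpolyC0 mulr0.
rewrite (bigD1 j) //= eqxx mpolyC1 mulr1 big1 ?addr0 //.
by move=> l /andP[_ /negbTE ->]; rewrite mpolyC0 mulr0.
Qed.

Lemma qE (j : 'I_n) : (j < a)%N -> q j = 'X_(zv j) + Bb j.
Proof.
move=> Hj; rewrite /Qpoly (mderivD _ (@Apoly R n a b + Bpoly beta)) (mderivD _ (@Apoly R n a b)).
by rewrite ApolyD // BpolyD addr0 BbarE.
Qed.

Lemma Bb_comp j (S : (n+n).-tuple P) :
  (forall l, tnth S (zbv l) = 'X_(zbv l)) -> Bb j \mPo S = Bb j.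
Proof.
move=> HS; rewrite /Bb raddf_sum /=; apply: eq_bigr => l _.
rewrite raddf_sum /=; apply: eq_bigr => m _.
by rewrite comp_mpolyZ rmorphD !rmorphM /= !comp_mpolyC !comp_mpolyXU -!tnth_nth !HS.
Qed.

Lemma Bb_eval j (v : 'I_(n+n) -> C) :
  (forall l, v (zbv l) = 0) -> (Bb j).@[v] = 0.
Proof.
move=> Hv; rewrite /Bb raddf_sum /= big1 // => l _.
rewrite raddf_sum /= big1 // => m _.
by rewrite mevalZ mevalD !mevalM !mevalC !mevalXU !Hv mulr0 mul0r addr0 mulr0.
Qed.
End Q.

Section Core.
Local Open Scope complex_scope.
Variable R : realType.
Local Notation C := R[i].
Variables (n a b : nat) (beta : 'M[C]_n).
Hypothesis Hn : (1 < n)%N.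
Hypothesis Ha : (1 < a)%N.
Local Notation Q := (Qpoly a b beta).
Local Notation q j := (Q^`M(zbv j)).
Local Notation P := {mpoly C[n+n]}.

Let i0 : 'I_n := Ordinal (ltn_trans (ltnSn 0) Hn).
Let i1 : 'I_n := Ordinal Hn.
Let i0a : (i0 < a)%N. Proof. exact: ltn_trans (ltnSn 0) Ha. Qed.
Let i1a : (i1 < a)%N. Proof. exact: Ha. Qed.
Let i01 : (zv i0 == zv i1) = false. Proof. by rewrite zv_eq. Qed.

Definition ev1 (x : 'I_(n+n)) : 'I_(n+n) -> C := fun y => (y == x)%:R.

Lemma q1_ne0 : q i1 != 0.
Proof.
apply/negP => /eqP H.
have := congr1 (meval (ev1 (zv i1))) H.
rewrite qE // mevalD mevalXU Bb_eval; last by move=> l; rewrite /ev1 zbv_zv.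
by rewrite /ev1 eqxx addr0 meval0 => /eqP; rewrite oner_eq0.
Qed.

Lemma q0_size : (1 < msize (q i0))%N.
Proof.
rewrite ltnNge; apply/negP => /msize1_polyC H.
have E : forall v, (forall l, v (zbv l) = 0) -> (q i0).@[v] = v (zv i0).
  by move=> v Hv; rewrite qE // mevalD mevalXU Bb_eval // addr0.
have H1 := E (ev1 (zv i0)) (fun l => ltac:(by rewrite /ev1 zbv_zv)).
have H2 := E (fun _ => 0) (fun l => erefl).
rewrite H mevalC in H1; rewrite H mevalC in H2; move: H1; rewrite H2 /ev1 eqxx => /eqP.
by rewrite eq_sym oner_eq0.
Qed.

Lemma q0_ne0 : q i0 != 0.
Proof. by rewrite -msize_poly_eq0 -lt0n (ltn_trans _ q0_size). Qed.

Lemma q_cop (p r : P) : p * q i1 = r * q i0 -> exists l, p = l * q i0.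
Proof.
move=> H.
pose S : (n+n).-tuple P := [tuple (if i == zv i0 then 'X_(zv i0) - q i0 else 'X_i) | i < n+n].
have HS : forall j, j != zv i0 -> tnth S j = 'X_j.
  by move=> j Hj; rewrite tnth_map tnth_ord_tuple (negbTE Hj).
have HSb : forall l, tnth S (zbv l) = 'X_(zbv l).
  by move=> l; apply: HS; rewrite zbv_zv.
have S0 : tnth S (zv i0) = 'X_(zv i0) - q i0 by rewrite tnth_map tnth_ord_tuple eqxx.
have [r' Hr'] := comp_div HS p.
have Hq0 : q i0 \mPo S = 0.
  rewrite qE // comp_mpolyD comp_mpolyXU -tnth_nth S0 Bb_comp // qE //.
  by rewrite opprD addrA subrr sub0r addNr.
have Hq1 : q i1 \mPo S = q i1.
  by rewrite qE // comp_mpolyD comp_mpolyXU -tnth_nth HS ?Bb_comp.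
have Hp : p \mPo S = 0.
  have cM : forall x y : P, (x * y) \mPo S = (x \mPo S) * (y \mPo S).
    by move=> x y; exact: (rmorphM (comp_mpoly S) x y).
  have Hne : q i1 \mPo S != 0.
    apply/negP => /eqP H0; move/negP: q1_ne0; apply; apply/eqP; exact: (etrans (esym Hq1) H0).
  have E1 := etrans (esym (cM p (q i1))) (etrans (congr1 (comp_mpoly S) H) (cM r (q i0))).
  have E2 := etrans E1 (etrans (congr1 (fun x => (r \mPo S) * x) Hq0) (mulr0 _)).
  by apply: (mulIf Hne); exact: (etrans E2 (esym (mul0r _))).
exists r'; move: Hr'; rewrite Hp subr0 S0 opprB addrC subrK => ->.
by rewrite mulrC.
Qed.

Lemma split_l1 (l : 'I_n) : split (lshift 1 l) = inl l.
Proof. exact: (unsplitK (inl _)). Qed.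
Lemma split_r1 (o : 'I_1) : split (rshift n o) = inr o.
Proof. exact: (unsplitK (inr _)). Qed.

Definition Ttup : (n+1).-tuple P :=
  [tuple (match split i with inl j => 'X_(zv j) | inr _ => Q end) | i < n+1].
Local Notation T := Ttup.
Definition s0 : 'I_(n+1) := rshift n ord0.

Lemma T_l j : tnth T (lshift 1 j) = 'X_(zv j).
Proof. by rewrite tnth_map tnth_ord_tuple split_l1. Qed.
Lemma T_r o : tnth T (rshift n o) = Q.
Proof. by rewrite tnth_map tnth_ord_tuple split_r1. Qed.
Lemma ls_s0 (l : 'I_n) : (lshift 1 l == s0) = false.
Proof. by apply/negbTE; rewrite -val_eqE /= addn0 neq_ltn ltn_ord. Qed.

Lemma chain (H : {mpoly C[n+1]}) j :
  (H \mPo T)^`M(zbv j) = (H^`M(s0) \mPo T) * q j.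
Proof.
rewrite chain_gen big_split_ord /= big_ord1 big1 ?add0r.
  by rewrite T_r.
by move=> l _; rewrite T_l mderivXU zv_zbv mpolyC0 mulr0.
Qed.

Definition mxz (m : 'X_{1..n+n}) : 'X_{1..n+1} :=
  [multinom [tuple (match split i with inl j => m (zv j) | inr _ => 0%N end) | i < n+1]].

Lemma base (g : P) : (forall j, g^`M(zbv j) = 0) -> exists h : {mpoly C[n+1]}, g = h \mPo T.
Proof.
move=> Hg; exists (\sum_(m <- msupp g) g@_m *: 'X_[mxz m]).
rewrite {1}[g]mpolyE raddf_sum /= big_seq [RHS]big_seq; apply: eq_bigr => m Hm.
rewrite comp_mpolyZ comp_mpolyX; congr (_ *: _).
rewrite mpolyXE_id big_split_ord [RHS]big_split_ord /= big_ord1.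
rewrite [X in _ * X = _]big1 ?mulr1; last first.
  by move=> l _; rewrite (mderiv0_supp (Hg l) Hm) expr0.
rewrite T_r mnmE split_r1 expr0 mulr1; apply: eq_bigr => l _.
by rewrite T_l mnmE split_l1.
Qed.

Definition Cond (f : P) := forall j k, f^`M(zbv j) * q k = f^`M(zbv k) * q j.

Lemma core N : forall f : P, (msize f <= N)%N -> Cond f -> exists F, f = F \mPo T.
Proof.
elim: N => [|N IH] f Hs Hc.
  exists 0; rewrite comp_mpoly0; apply/eqP; rewrite -msize_poly_eq0 -leqn0 //.
have [l Hl] := q_cop (Hc i0 i1).
have Hall : forall j, f^`M(zbv j) = l * q j.
  move=> j; apply: (mulIf q0_ne0); rewrite (Hc j i0) Hl; exact: mulrAC.
have Hcl : Cond l.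
  move=> j k; have := mderiv_comm (zbv j) (zbv k) f.
  rewrite (Hall j) (Hall k) (mderivM (zbv k) l) (mderivM (zbv j) l).
  rewrite (mderiv_comm (zbv j) (zbv k) Q) => /addIr E.
  by rewrite E.
have [l0|lnz] := eqVneq l 0.
  apply: base => j; by rewrite Hall l0 mul0r.
have Hsl : (msize l <= N)%N.
  have H1 := msize_mderiv f (zbv i0).
  rewrite Hl (msizeM lnz q0_ne0) in H1.
  have H2 := q0_size.
  move: H1 H2 Hs; move: (msize l) (msize (q i0)) (msize f) => x y z; lia.
have [G HG] := IH l Hsl Hcl.
pose H := antider s0 G.
have Hd : forall j, (f - (H \mPo T))^`M(zbv j) = 0.
  move=> j; rewrite (mderivB _ f) chain antiderK -HG Hall; exact: subrr.
have [h Hh] := base Hd.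
exists (H + h); rewrite comp_mpolyD -Hh addrC; exact: (esym (subrK _ _)).
Qed.

End Core.

Section CR.
Local Open Scope complex_scope.
Variable R : realType.
Local Notation C := R[i].
Variables (n a b : nat) (beta : 'M[C]_n).
Local Notation Q := (Qpoly a b beta).
Local Notation q j := (Q^`M(zbv j)).

Lemma sum_delta (j : 'I_n) (c : C) (F : 'I_n -> C) :
  \sum_(l < n) (if l == j then c else 0) * F l = c * F j.
Proof.
rewrite (bigD1 j) //= eqxx big1 ?addr0 // => l /negbTE ->; by rewrite mul0r.
Qed.

Lemma rank_dbar (z : 'rV[C]_n) (l : 'I_n) :
  (q l).@[zzbar z] != 0 -> \rank (dbar_rho a b beta z) = 2%N.
Proof.
move=> Hq; set A := dbar_rho a b beta z; set c := (q l).@[zzbar z].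
apply/eqP; rewrite eqn_leq rank_leq_col /=.
pose f : 'I_2 -> 'I_(n+1) := fun x => if x == 0 then lshift 1 l else rshift n ord0.
pose S' : 'M[C]_2 := \matrix_(r < 2, s < 2)
   (if r == 0 then (if s == 0 then - 'i / c else - (2 * 'i)) else (if s == 0 then - c^-1 else 0)).
have E : S' *m rowsub f A = 1%:M.
  apply/matrixP => r s; rewrite !mxE big_ord_recl big_ord1 !mxE /f /=.
  rewrite split_l1 split_r1 /= -/c.
  have ii : 'i * 'i = -1 :> C by rewrite -expr2 sqr_i.
  case: r => [[|[|//]] Hr]; case: s => [[|[|//]] Hs] /=; rewrite ?mxE /=.
  - have -> : - 'i / c * 0 + - (2 * 'i) * ('i / 2) = - ('i * 'i) * (2 / 2) by ring.
    by rewrite ii opprK mul1r divff // pnatr_eq0.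
  - have -> : - 'i / c * - c + - (2 * 'i) * (1 / 2) = 'i * (c / c) - 'i * (2 / 2) by ring.
    by rewrite !divff ?pnatr_eq0 // subrr.
  - by rewrite mulr0 mul0r addr0.
  - by rewrite mul0r addr0 mulNr mulrN opprK mulVf.
have := mxrankM_maxr S' (rowsub f 1%:M *m A).
rewrite -rowsubE E mxrank1 => H; apply: leq_trans H _.
by rewrite rowsubE; apply: mxrankM_maxr.
Qed.
Lemma inMCR_of (z : 'rV[C]_n) (l : 'I_n) :
  (q l).@[zzbar z] != 0 -> in_MCR a b beta z.
Proof.
move=> H; rewrite /in_MCR mxrank_ker (rank_dbar H).
by rewrite addn1 subSS subn1.
Qed.

Lemma CR_pt (f : {mpoly C[n+n]}) : CR_on_MCR a b beta f ->
  forall z j k, (f^`M(zbv j) * q k - f^`M(zbv k) * q j).@[zzbar z] = 0.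
Proof.
move=> Hf z j k; rewrite mevalB !mevalM.
set qj := (q j).@[zzbar z]; set qk := (q k).@[zzbar z].
set fj := (f^`M(zbv j)).@[zzbar z]; set fk := (f^`M(zbv k)).@[zzbar z].
have [Hz|Hnz] := boolP ((qj == 0) && (qk == 0)).
  by case/andP: Hz => /eqP -> /eqP ->; rewrite !mulr0 subrr.
have HM : in_MCR a b beta z.
  by move: Hnz; rewrite negb_and => /orP [Hj|Hk]; [exact: (inMCR_of Hj) | exact: (inMCR_of Hk)].
pose u : 'rV[C]_(n+1) := \row_i match split i with
         inl l => (if l == j then qk else 0) - (if l == k then qj else 0) | inr _ => 0 end.
have Hu : u *m dbar_rho a b beta z = 0.
  apply/rowP => c; rewrite !mxE big_split_ord /= big_ord1 !mxE split_r1 mul0r addr0.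
  under eq_bigr do rewrite !mxE split_l1.
  case: (c == 0); first by rewrite big1 // => l _; rewrite mulr0.
  under eq_bigr do rewrite mulrBl.
  rewrite sumrB (sum_delta j qk) (sum_delta k qj) /qj /qk.
  by rewrite mulrN mulrN (mulrC (q k).@[zzbar z]) subrr.
have := Hf z HM u Hu.
under eq_bigr do rewrite mxE split_l1 mulrBl.
rewrite sumrB (sum_delta j qk) (sum_delta k qj) -/fj -/fk => H.
by rewrite (mulrC fj) (mulrC fk).
Qed.

End CR.

Definition wt n (m : 'X_{1..n+1}) : nat :=
  (\sum_(j < n) m (lshift 1 j) + 2 * m (rshift n (ord0 : 'I_1)))%N.
Lemma wt0 n : @wt n 0%MM = 0%N.
Proof. by rewrite /wt big1 // => *; rewrite mnm0E. Qed.
Lemma wtD n : {morph @wt n : m1 m2 / (m1 + m2)%MM >-> (m1 + m2)%N}.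
Proof.
move=> m1 m2; rewrite /wt mnmDE mulnDr.
under eq_bigr do rewrite mnmDE. rewrite big_split /=. lia.
Qed.
HB.instance Definition _ n := isMeasure.Build (n+1) (@wt n) (@wt0 n) (@wtD n).

Section Hom.
Local Open Scope complex_scope.
Variable R : realType.
Local Notation C := R[i].
Variables (n a b : nat) (beta : 'M[C]_n).
Local Notation Q := (Qpoly a b beta).
Local Notation P := {mpoly C[n+n]}.
Local Notation T := (@Ttup R n a b beta).

Lemma prod_homog k (F : 'I_k -> P) (D : 'I_k -> nat) :
  (forall i, F i \is (D i).-homog) -> \prod_(i < k) F i \is (\sum_(i < k) D i)%N.-homog.
Proof.
move=> H; elim/big_rec2: _ => [|i d p _ Hp]; first exact: dhomog1.
exact: dhomogM.
Qed.

Lemma X_homog (i : 'I_(n+n)) : ('X_i : P) \is 1.-homog.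
Proof. by rewrite dhomogX; apply/eqP; exact: mdeg1. Qed.

Lemma XX_homog (i j : 'I_(n+n)) : ('X_i * 'X_j : P) \is 2.-homog.
Proof. exact: (dhomogM (X_homog i) (X_homog j)). Qed.

Lemma Q_homog : Q \is 2.-homog.
Proof.
rewrite /Qpoly /Apoly /Bpoly /Bbarpoly.
apply: rpredD; first apply: rpredD.
- by apply: rpredB; apply: rpred_sum => l _; exact: XX_homog.
- by apply: rpred_sum => l _; apply: rpred_sum => m _; apply: rpredZ; exact: XX_homog.
- by apply: rpred_sum => l _; apply: rpred_sum => m _; apply: rpredZ; exact: XX_homog.
Qed.

Lemma comp_homog d (p : {mpoly C[n+1]}) :
  p \is d.-homog for (@wt n) -> (p \mPo T) \is d.-homog.
Proof.
move=> /dhomogP Hp; rewrite [p]mpolyE raddf_sum /= big_seq; apply: rpred_sum => m Hm.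
rewrite comp_mpolyZ; apply: rpredZ; rewrite comp_mpolyX.
have <- : (\sum_(i < n+1) (if split i is inl _ then 1 else 2) * m i)%N = d.
  rewrite -(Hp m Hm) /= /wt big_split_ord /= big_ord1 split_r1.
  congr (_ + _)%N; apply: eq_bigr => l _; by rewrite split_l1 mul1n.
apply: prod_homog => i.
have -> : i = unsplit (split i) by rewrite splitK.
case: (split i) => [l|o] /=; rewrite ?split_l1 ?split_r1 ?T_l ?T_r; apply: dhomogMn.
  exact: X_homog.
exact: Q_homog.
Qed.

End Hom.

Section Fin.
Local Open Scope complex_scope.
Variable R : realType.
Local Notation C := R[i].
Variables (n a b : nat) (beta : 'M[C]_n).
Local Notation Q := (Qpoly a b beta).
Local Notation P := {mpoly C[n+n]}.
Local Notation T := (@Ttup R n a b beta).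

Lemma proj_hom (F : {mpoly C[n+1]}) d : (F \mPo T) \is d.-homog ->
  F \mPo T = (pihomog (@wt n) d F) \mPo T.
Proof.
move=> Hd.
pose K := maxn (mmeasure (@wt n) F) d.+1.
have EF := pihomog_partitionE (leq_maxl (mmeasure (@wt n) F) d.+1).
have dK : (d < K)%N by rewrite leq_max ltnSn orbT.
rewrite -(pihomog_dE Hd).
have -> : F \mPo T = \sum_(w < K) (pihomog (@wt n) w F \mPo T) by rewrite {1}EF raddf_sum.
rewrite raddf_sum (bigD1 (Ordinal dK)) //= big1 ?addr0.
  rewrite pihomog_dE; first by []. by apply: comp_homog; exact: pihomogP.
move=> w Hw; apply: (pihomog_ne0 (d := w)).
  by apply: contra Hw => /eqP Hw; apply/eqP/val_inj.
by apply: comp_homog; exact: pihomogP.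
Qed.
End Fin.

Unset Implicit Arguments.
Theorem lemma6p1 (R : realType) (n a b : nat) (beta : 'M[R[i]]_n)
  (f : {mpoly R[i][n + n]}) :
  (2 <= n)%N -> (2 <= a)%N -> (a + b <= n)%N ->
  nondegenerate_Q a b beta ->
  CR_on_MCR a b beta f ->
  exists F : {mpoly R[i][n + 1]},
    (forall z : 'rV[R[i]]_n, f.@[zzbar z] = F.@[zQ a b beta z]) /\
    (forall d : nat, f \is d.-homog -> weighted_homog d F).
Proof.
move=> Hn Ha _ _ HCR.
have Cf : Cond a b beta f.
  move=> j k; apply/eqP; rewrite -subr_eq0; apply/eqP; apply: zzbar0 => z.
  exact: (CR_pt HCR z j k).
have [F0 HF0] := core Hn Ha (leqnn (msize f)) Cf.
have Hev : forall F z, (F \mPo Ttup a b beta).@[zzbar z] = F.@[zQ a b beta z].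
  move=> F z; rewrite comp_mpoly_meval; apply: meval_eq => i.
  have -> : i = unsplit (split i) by rewrite splitK.
  case: (split i) => [l|o] /=.
    by rewrite T_l mevalXU /zQ /zzbar split_l1 split_zv.
  by rewrite T_r /zQ split_r1.
have [f0|fnz] := eqVneq f 0.
  exists 0; split; first by move=> z; rewrite f0 !meval0.
  by move=> d _ m; rewrite msupp0.
case: (classic (exists d, f \is d.-homog)) => [[d0 Hd0]|Hnh].
  exists (pihomog (@wt n) d0 F0); split.
    move=> z; rewrite -Hev -proj_hom -?HF0 //.
  move=> d Hd; have <- := dhomog_uniq fnz Hd Hd0.
  move=> m Hm; exact: (dhomog_mf (pihomogP (@wt n) d F0) Hm).
exists F0; split; first by move=> z; rewrite HF0 Hev.
by move=> d Hd; exfalso; apply: Hnh; exists d.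
Qed.
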